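(* Let $n\ge1$ and let $x\in\mathbb{Z}_n$ have order $m$. Then the degree of $x$ in $OD(\mathbb{Z}_n)$ is $$\deg(x)=m-2\phi(m)+\sum_{\lambda\mid \frac{n}{m}}\phi(\lambda m),$$ where $\phi$ is Euler's totient function and the sum runs over positive divisors $\lambda$ of $n/m$.
   Context: $\mathbb{Z}_n$ is the additive cyclic group of integers modulo $n$. For a finite group $G$, $o(x)$ denotes the order of $x\in G$. The order-divisor graph $OD(G)$ is the simple undirected graph with vertex set $G$, in which two distinct vertices $x,y$ are adjacent if and only if $o(x)\neq o(y)$ and either $o(x)\mid o(y)$ or $o(y)\mid o(x)$. *)

(* Defs.v *)
From mathcomp Require Import all_boot all_order all_algebra all_fingroup.
Set Implicit Arguments. Unset Strict Implicit. Unset Printing Implicit Defensive.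

Definition od_adj (gT : finGroupType) (x y : gT) : bool :=
  [&& x != y, #[x]%g != #[y]%g & (#[x]%g %| #[y]%g) || (#[y]%g %| #[x]%g)].

Definition od_deg (gT : finGroupType) (x : gT) : nat :=
  #|[set y : gT | od_adj x y]|.

(* Main.v *)
Require Import Defs.
From mathcomp Require Import all_boot all_order all_algebra all_fingroup all_solvable.
From mathcomp Require Import zify.
Import GRing.Theory.

Section Cyc.
Variable gT : finGroupType.
Variable g : gT.
Local Open Scope group_scope.
Hypothesis hg : forall y : gT, y \in <[g]>.

Lemma divn_divK N d : (0 < N)%N -> (d %| N)%N -> (N %/ (N %/ d))%N = d.
Proof.
move=> N0 /dvdnP [k Nk]; subst N.
have k0 : 0 < k by case: k N0.
have d0 : 0 < d by case: d N0; rewrite ?muln0.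
by rewrite mulnK // mulKn.
Qed.

Lemma ord_eq_card (y : gT) : #|[set z : gT | #[z] == #[y]]| = totient #[y].
Proof.
rewrite totient_gen; apply: eq_card => z; rewrite !inE /generator.
rewrite (eq_subG_cyclic (cycle_cyclic g)); last 2 first.
- by apply/subsetP => w _; apply: hg.
- by apply/subsetP => w _; apply: hg.
by rewrite -!orderE eq_sym.
Qed.

Lemma sub_cyc (x z : gT) : (z \in <[x]>) = (#[z] %| #[x]).
Proof.
apply/idP/idP; first by move=> zx; rewrite [#[x]]orderE; exact: order_dvdG zx.
move=> dz.
set k := #[x] %/ #[z].
have ex : #[x] = (k * #[z])%N by rewrite divnK.
have k0 : (0 < k)%N by rewrite lt0n; apply/eqP=> k0; move: (order_gt0 x); rewrite ex k0.
have ok : #[x ^+ k] = #[z].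
  rewrite orderXdiv; last by rewrite ex dvdn_mulr.
  by rewrite ex mulKn.
have : <[z]> == <[x ^+ k]>.
  rewrite (eq_subG_cyclic (cycle_cyclic g)); last 2 first.
  - by apply/subsetP => w _; apply: hg.
  - by apply/subsetP => w _; apply: hg.
  by rewrite -!orderE ok.
move/eqP => e.
have : z \in <[x ^+ k]> by rewrite -e cycle_id.
by apply/subsetP; rewrite cycle_subG groupX // cycle_id.
Qed.

Lemma card_mult (m : nat) : (m %| #[g])%N ->
  #|[set y : gT | (m %| #[y])%N]| =
    (\sum_(l <- divisors (#[g] %/ m)) totient (l * m))%N.
Proof.
move=> mN.
have N0 := order_gt0 g.
have m0 : (0 < m)%N by apply: dvdn_gt0 N0 mN.
have eN : #[g] = (#[g] %/ m * m)%N by rewrite divnK.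
have Nm0 : (0 < #[g] %/ m)%N by rewrite divn_gt0 // dvdn_leq.
transitivity (\sum_(l <- divisors (#[g] %/ m)) #|[set y : gT | #[y] == (l * m)%N]|)%N;
  last first.
  apply: eq_big_seq => l; rewrite -dvdn_divisors // => ldiv.
  have lmN : (l * m %| #[g])%N by rewrite [in X in (_ %| X)%N]eN dvdn_mul ?dvdnn.
  have oy : #[g ^+ (#[g] %/ (l * m))] = (l * m)%N.
    by rewrite orderXdiv ?divn_divK // dvdn_div.
  by rewrite -oy ord_eq_card.
under eq_bigr => l _ do rewrite -sum1_card big_mkcond /=.
rewrite exchange_big /= -sum1_card big_mkcond /=.
apply: eq_bigr => y _; rewrite inE.
under eq_bigr => l _ do rewrite inE.
rewrite -big_mkcond /= -big_filter sum1_size size_filter.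
have yN : (#[y] %| #[g])%N by rewrite [#[g]]orderE; apply: order_dvdG.
case: ifP => my.
  have e : #[y] = (#[y] %/ m * m)%N by rewrite divnK.
  rewrite (eq_count (a2 := pred1 (#[y] %/ m))); last first.
    by move=> l /=; rewrite [in LHS]e eqn_mul2r eqn0Ngt m0 /= eq_sym.
  rewrite count_uniq_mem ?divisors_uniq // -dvdn_divisors //.
  by rewrite -(dvdn_pmul2r m0) -e -eN yN.
apply/eqP; rewrite eq_sym -leqn0 leqNgt -has_count; apply/negP => /hasP [l _ /eqP e].
by move: my; rewrite e dvdn_mull.
Qed.

Lemma deg_nat (x : gT) : (od_deg x + 2 * totient #[x] =
  #[x] + \sum_(l <- divisors (#[g] %/ #[x])) totient (l * #[x]))%N.
Proof.
set m := #[x].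
set A := [set y : gT | (#[y] %| m)%N].
set B := [set y : gT | (m %| #[y])%N].
set E := [set y : gT | #[y] == m].
have adjE : [set y | od_adj x y] = (A :\: E) :|: (B :\: E).
  apply/setP => y; rewrite !inE /od_adj -/m.
  case: (eqVneq #[y] m) => [->|ne] /=; first by rewrite andbF.
  have -> : (x != y) by apply/eqP => xy; move: ne; rewrite -xy /m eqxx.
  by rewrite orbC.
have disj : (A :\: E) :&: (B :\: E) = set0.
  apply/setP => y; rewrite !inE.
  case: (eqVneq #[y] m) => //= ne; apply/negP => /andP [a b].
  by move: ne; rewrite eqn_dvd a b.
rewrite /od_deg adjE cardsU disj cards0 subn0.
have EA : E \subset A by apply/subsetP => y; rewrite !inE => /eqP ->.
have EB : E \subset B by apply/subsetP => y; rewrite !inE => /eqP ->.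
have lA := subset_leq_card EA.
have lB := subset_leq_card EB.
rewrite !cardsDS //.
have cA : #|A| = m.
  have -> : A = <[x]> by apply/setP => y; rewrite inE sub_cyc.
  by rewrite -orderE.
have cE : #|E| = totient m := ord_eq_card x.
have cB : #|B| = (\sum_(l <- divisors (#[g] %/ m)) totient (l * m))%N.
  apply: card_mult; rewrite [#[g]]orderE; exact: order_dvdG.
move: lA lB; rewrite cA cB cE => lA lB.
lia.
Qed.
End Cyc.

Local Open Scope ring_scope.

Theorem mainTheorem11 (n : nat) (hn : (0 < n)%N) (x : 'I_n.-1.+1) :
  (od_deg x)%:Z =
    (#[x]%g)%:Z - 2 * (totient #[x]%g)%:Z
    + (\sum_(l <- divisors (n %/ #[x]%g)) totient (l * #[x]%g))%:Z.
Proof.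
have hg : forall y : 'I_n.-1.+1, y \in <[Zp1]>%g.
  by move=> y; rewrite -Zp_cycle inE.
have H := @deg_nat _ _ hg x.
rewrite order_Zp1 prednK // in H.
lia.
Qed.
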